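(* Let $d>1$ be a square-free integer, $F=\mathbf Q(\sqrt d)$, and let $(V,h,\psi)$ be a Hodge structure of K3 type with $\mathrm{End}_{Hod}(V)=F$ and $m=\dim_F V$ odd. Then $a=d+\sqrt d$ is totally positive, and the quadratic spaces $(V,\psi)$ and $(V,\psi_a)$, where $\psi_a(v,w)=\psi(av,w)$, are not isometric over $\mathbf Q$.
   Context: A Hodge structure of K3 type is a simple polarized rational weight two Hodge structure with $\dim V^{2,0}=1$; $\mathrm{End}_{Hod}(V)$ is the algebra of endomorphisms of the Hodge structure. An element of a totally real field is totally positive if all its real embeddings are positive. *)

(* Defs.v *)
From HB Require Import structures.
From mathcomp Require Import all_boot all_order all_algebra.
From mathcomp Require Import complex.
From mathcomp Require Import reals Rstruct.
From Stdlib Require Rdefinitions.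
Set Implicit Arguments. Unset Strict Implicit. Unset Printing Implicit Defensive.
Import Order.TTheory GRing.Theory Num.Theory.
Local Open Scope ring_scope.

Definition RR : realType := Rdefinitions.R.
Definition CC := complex RR.

Definition squarefree (n : nat) : Prop :=
  forall p : nat, prime p -> ~~ (p * p %| n)%N.

(* V = Q^n (row vectors), a linear endomorphism acts on rows by v |-> v *m A,
   a bilinear form psi is given by its Gram matrix P: psi(v,w) = v *m P *m w^T. *)
Definition cplx {m n : nat} (A : 'M[rat]_(m, n)) : 'M[CC]_(m, n) :=
  map_mx (fun q : rat => ratr q) A.
Definition cconj {m n : nat} (A : 'M[CC]_(m, n)) : 'M[CC]_(m, n) :=
  map_mx (fun z : CC => z^*) A.

Definition formC {n : nat} (P : 'M[rat]_n) (x y : 'rV[CC]_n) : CC :=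
  (x *m cplx P *m y^T) 0 0.

(* A rational weight two Hodge structure on Q^n with h^{2,0} = 1, given by
   V^{2,0} = <w>, V^{1,1} = row space of H, V^{0,2} = <conj w>:
   V_C = V^{2,0} (+) V^{1,1} (+) V^{0,2}, with V^{1,1} stable under conjugation. *)
Definition hodge_wt2_h20_1 (n : nat) (w : 'rV[CC]_n) (H : 'M[CC]_n) : Prop :=
  [/\ w != 0,
      (cconj H == H)%MS,
      \rank H = (n - 2)%N &
      row_full (col_mx (col_mx w H) (cconj w))].

(* psi is a polarization of that Hodge structure (Hodge-Riemann relations
   for weight 2: psi(V^{p,q}, V^{p',q'}) = 0 unless p+p' = 2,
   psi(x, conj x) > 0 on V^{2,0}\{0}, psi(x, conj x) < 0 on V^{1,1}\{0}). *)
Definition polarization (n : nat) (P : 'M[rat]_n) (w : 'rV[CC]_n)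
    (H : 'M[CC]_n) : Prop :=
  [/\ P^T = P,
      formC P w w = 0,
      w *m cplx P *m H^T = 0,
      0 < formC P w (cconj w) &
      forall x : 'rV[CC]_n, (x <= H)%MS -> x != 0 -> formC P x (cconj x) < 0].

(* Sub-Hodge structures: rational subspaces W (row space of a rational
   matrix) with W_C = (W_C cap V^{2,0}) + (W_C cap V^{1,1}) + (W_C cap V^{0,2}). *)
Definition sub_hodge (n : nat) (w : 'rV[CC]_n) (H : 'M[CC]_n)
    (W : 'M[rat]_n) : Prop :=
  (cplx W <= (cplx W :&: w) + (cplx W :&: H) + (cplx W :&: cconj w))%MS.

Definition simple_hodge (n : nat) (w : 'rV[CC]_n) (H : 'M[CC]_n) : Prop :=
  forall W : 'M[rat]_n, sub_hodge w H W -> \rank W = 0%N \/ \rank W = n.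

Definition K3_type (n : nat) (P : 'M[rat]_n) (w : 'rV[CC]_n) (H : 'M[CC]_n)
  : Prop :=
  [/\ hodge_wt2_h20_1 w H, polarization P w H & simple_hodge w H].

(* Endomorphisms of the Hodge structure: Q-linear maps whose complexification
   preserves every V^{p,q} (V^{0,2} is then preserved automatically, being
   the conjugate of V^{2,0} and the map being rational; we include it anyway). *)
Definition hodge_endo (n : nat) (w : 'rV[CC]_n) (H : 'M[CC]_n)
    (A : 'M[rat]_n) : Prop :=
  [/\ (w *m cplx A <= w)%MS, (H *m cplx A <= H)%MS &
      (cconj w *m cplx A <= cconj w)%MS].

(* End_Hod(V) = F = Q(sqrt d), with sqrt d acting as S:
   S is a Hodge endomorphism, S^2 = d, and End_Hod(V) = Q + Q S. *)
Definition End_hod_is_quad (n : nat) (w : 'rV[CC]_n) (H : 'M[CC]_n)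
    (d : nat) (S : 'M[rat]_n) : Prop :=
  [/\ hodge_endo w H S, S *m S = (d%:R)%:M &
      forall A : 'M[rat]_n, hodge_endo w H A ->
        exists x y : rat, A = x%:M + y *: S].

(* x + y sqrt d in Q(sqrt d) is totally positive: positive under both real
   embeddings sqrt d |-> r, r a real square root of d. *)
Definition totally_positive_quad (d : nat) (x y : rat) : Prop :=
  forall r : RR, r ^+ 2 = d%:R -> 0 < ratr x + ratr y * r.

Definition isometric (n : nat) (P1 P2 : 'M[rat]_n) : Prop :=
  exists g : 'M[rat]_n, g \in unitmx /\ g *m P2 *m g^T = P1.

(* Main.v *)
From HB Require Import structures.
From mathcomp Require Import all_boot all_order all_algebra complex reals Rstruct.
From mathcomp Require Import zify ring lra.
Require Import Defs.
Import Order.TTheory GRing.Theory Num.Theory.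
Local Open Scope ring_scope.
Lemma char_poly_horner (R : comNzRingType) n (A : 'M[R]_n) (x : R) :
  (char_poly A).[x] = \det (x%:M - A).
Proof.
rewrite -horner_evalE /char_poly -det_map_mx /char_poly_mx; congr (\det _).
apply/matrixP=> i j.
by rewrite !mxE raddfB/= raddfMn/= /horner_eval !hornerE.
Qed.

Lemma charM (R : comNzRingType) n (S : 'M[R]_n) (c : R) :
  S *m S = c%:M ->
  char_poly (- S) * char_poly S = ('X^2 - c%:P) ^+ n.
Proof.
move=> hS; rewrite /char_poly -det_mulmx /char_poly_mx.
have -> : map_mx polyC (- S) = - map_mx polyC S by rewrite map_mxN.
rewrite opprK mulmxDl !mulmxBr -!scalar_mxM mul_mx_scalar mul_scalar_mx.
rewrite -map_mxM hS map_scalar_mx.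
idtac.
rewrite addrA subrK -(raddfB (@scalar_mx _ n)) -expr2 det_scalar /=. by [].
Qed.
Lemma dvd_irr_exp (F : fieldType) (q : {poly F}) (k : nat) :
  irreducible_poly q -> forall f, f %| q ^+ k -> exists j, f %= q ^+ j.
Proof.
move=> hq; elim: k => [|k IH] f hf.
  exists 0%N; rewrite expr0 in hf *.
  by move: hf; rewrite dvdp1 => /size_poly1P [c c0 ->]; rewrite polyC_eqp1.
have q0 : q != 0 by exact: irredp_neq0.
have [cop|ncop] := boolP (coprimep f q).
  by apply: IH; rewrite -(Gauss_dvdpl _ cop) -exprSr.
have g1 : size (gcdp f q) != 1%N by [].
have [_ hirr] := hq.
have hgq := hirr _ g1 (dvdp_gcdr f q).
have qf : q %| f by rewrite -(eqp_dvdl _ hgq) dvdp_gcdl.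
have fE := divpK qf.
have : (f %/ q) %| q ^+ k by rewrite -(dvdp_mul2r _ _ q0) fE -exprSr.
move=> /IH [j hj]; exists j.+1.
by rewrite -fE exprSr eqp_mul2r.
Qed.
Lemma irr_q (c : rat) : (forall r : rat, r ^+ 2 != c) ->
  irreducible_poly ('X^2 - c%:P).
Proof.
move=> hc.
have sq : size ('X^2 - c%:P) = 3%N by rewrite size_XnsubC.
split; first by rewrite sq.
move=> g g1 gd.
have q0 : 'X^2 - c%:P != 0 by rewrite -size_poly_eq0 sq.
have g0 : g != 0 by apply: contraNneq q0 => e; move: gd; rewrite e dvd0p.
have := dvdp_leq q0 gd; rewrite sq => gle.
rewrite -dvdp_size_eqp // sq.
have [//|gne] := eqVneq (size g) 3%N.
have g2 : (1 < size g < size ('X^2 - c%:P)%R)%N.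
  rewrite sq; move: g1 gne gle; rewrite -size_poly_eq0 in g0; move: g0 => /eqP g0 g1 gne gle; apply/andP; split; lia.
have s4 : (size ('X^2 - c%:P)%R <= 4)%N by rewrite sq.
have [r hr] := reducible_cubic_root s4 g2 gd.
move: hr; rewrite /root !hornerE subr_eq0 => /eqP hr.
by move: (hc r); rewrite hr eqxx.
Qed.

Lemma det_dS (m n : nat) (hn : n = (2 * m)%N) (S : 'M[rat]_n) (c : rat)
  (hc : forall r : rat, r ^+ 2 != c) (hS : S *m S = c%:M) (x : rat) :
  \det (x%:M + S) = (x ^+ 2 - c) ^+ m.
Proof.
have hirr := @irr_q c hc.
have hd : char_poly (- S) %| ('X^2 - c%:P) ^+ n.
  by rewrite -(@charM _ _ S c hS) dvdp_mulr.
have [j hj] := @dvd_irr_exp _ _ _ hirr _ hd.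
have mq : 'X^2 - c%:P \is monic by rewrite monicXnsubC.
rewrite eqp_monic ?char_poly_monic ?monic_exp // in hj.
move/eqP: hj => hj.
have sz := size_exp ('X^2 - c%:P) j.
rewrite -hj size_char_poly size_XnsubC //= in sz.
have jm : j = m by move: sz; rewrite hn; lia.
have -> : x%:M + S = x%:M - (- S) by rewrite opprK.
by rewrite -char_poly_horner hj jm !hornerE.
Qed.
Lemma rat_sq_nat (N : nat) (r : rat) : r ^+ 2 = N%:R -> exists k : nat, N = (k * k)%N.
Proof.
move=> hr.
have d0 : (denq r)%:~R != 0 :> rat by rewrite intr_eq0 denq_neq0.
have h1 : ((numq r) ^+ 2)%:~R = (N%:Z * (denq r) ^+ 2)%:~R :> rat.
  rewrite -[r]divq_num_den in hr.
  rewrite !expr2 !intrM -[N%:Z%:~R]/(N%:R) -hr expr2; field; exact: d0.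
move/intr_inj: h1 => h1.
have h2 : (`|numq r| * `|numq r| = N * (`|denq r| * `|denq r|))%N.
  by apply/eqP; rewrite -eqz_nat -!abszM /= -!expr2 h1 abszM.
exists `|numq r|%N.
have cp := coprime_num_den r.
have hb : (`|denq r| %| `|numq r| * `|numq r|)%N by rewrite h2 dvdn_mull // dvdn_mulr.
have cb : coprime `|denq r| `|numq r| by rewrite coprime_sym.
rewrite (Gauss_dvdr _ cb) in hb.
have : `|denq r|%N = 1%N.
  by move: cb; rewrite /coprime (gcdn_idPl hb) => /eqP.
by move=> e; rewrite h2 e !muln1.
Qed.
Lemma cconjM m n p (A : 'M[CC]_(m, n)) (B : 'M[CC]_(n, p)) :
  cconj (A *m B) = cconj A *m cconj B.
Proof. exact: map_mxM. Qed.

Lemma cconjT m n (A : 'M[CC]_(m, n)) : cconj A^T = (cconj A)^T.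
Proof. by apply/matrixP => i j; rewrite !mxE. Qed.

Lemma cconjK m n (A : 'M[CC]_(m, n)) : cconj (cconj A) = A.
Proof. by apply/matrixP => i j; rewrite !mxE conjCK. Qed.

Lemma cconj_cplx m n (A : 'M[rat]_(m, n)) : cconj (cplx A) = cplx A.
Proof. by apply/matrixP => i j; rewrite !mxE fmorph_rat. Qed.

Lemma cplxT m n (A : 'M[rat]_(m, n)) : cplx A^T = (cplx A)^T.
Proof. by apply/matrixP => i j; rewrite !mxE. Qed.

Lemma det_cplx n (A : 'M[rat]_n) : \det (cplx A) = ratr (\det A).
Proof. by rewrite /cplx -det_map_mx. Qed.

Lemma mx11E (A : 'M[CC]_1) : A = (A 0 0)%:M.
Proof. exact: mx11_scalar. Qed.

Lemma formCDl n (P : 'M[rat]_n) x1 x2 y :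
  formC P (x1 + x2) y = formC P x1 y + formC P x2 y.
Proof. by rewrite /formC !mulmxDl mxE. Qed.

Lemma formCZl n (P : 'M[rat]_n) (c : CC) x y :
  formC P (c *: x) y = c * formC P x y.
Proof. by rewrite /formC -!scalemxAl mxE. Qed.

Lemma formC_sym n (P : 'M[rat]_n) x y : P^T = P -> formC P x y = formC P y x.
Proof.
move=> hP; rewrite /formC.
have -> : x *m cplx P *m y^T = (y *m cplx P *m x^T)^T.
  by rewrite !trmx_mul trmxK -cplxT hP mulmxA.
by rewrite mxE.
Qed.

Lemma formC_conj n (P : 'M[rat]_n) x y :
  formC P (cconj x) (cconj y) = (formC P x y)^*.
Proof.
by rewrite /formC -cconjT -[cplx P]cconj_cplx -!cconjM cconj_cplx mxE.
Qed.

Lemma detP_neq0 n (P : 'M[rat]_n) (w : 'rV[CC]_n) (H : 'M[CC]_n) :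
  hodge_wt2_h20_1 w H -> polarization P w H -> \det P != 0.
Proof.
case=> w0 HH _ full [sym ww wH wwb neg].
apply/negP => /eqP dP0.
have : \det (cplx P) == 0 by rewrite det_cplx dP0 rmorph0.
case/det0P => x x0 xP.
have fx y : formC P x y = 0 by rewrite /formC xP mul0mx mxE.
have /submxP [u xu] : (x <= col_mx (col_mx w H) (cconj w))%MS.
  by apply: submx_full.
rewrite -[u]hsubmxK -[lsubmx u]hsubmxK !mul_row_col in xu.
set a := lsubmx (lsubmx u) in xu; set u2 := rsubmx (lsubmx u) in xu.
set b := rsubmx u in xu.
rewrite [a]mx11E [b]mx11E !mul_scalar_mx in xu.
set h := u2 *m H in xu.
have wh : formC P w h = 0.
  by rewrite /formC trmx_mul mulmxA wH mul0mx mxE.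
have /submxP [K HK] : (cconj H <= H)%MS by case/andP: HH.
have wbH : cconj w *m cplx P *m H^T = 0.
  rewrite -[H]cconjK HK -cconjT -[cplx P]cconj_cplx -!cconjM.
  by rewrite trmx_mul mulmxA wH mul0mx; apply/matrixP => i j; rewrite !mxE conjC0.
have wbh : formC P (cconj w) h = 0.
  by rewrite /formC trmx_mul mulmxA wbH mul0mx mxE.
have wbwb : formC P (cconj w) (cconj w) = 0 by rewrite formC_conj ww conjC0.
have e1 := fx w.
rewrite xu !formCDl !formCZl ww (formC_sym _ _ h w sym) wh in e1.
rewrite (formC_sym _ _ (cconj w) w sym) mulr0 !add0r in e1.
have b0 : b 0 0 = 0.
  by move/eqP: e1; rewrite mulf_eq0 (gt_eqF wwb) orbF => /eqP.
have e2 := fx (cconj w).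
rewrite xu !formCDl !formCZl wbwb (formC_sym _ _ h (cconj w) sym) wbh b0 in e2.
rewrite mul0r !addr0 in e2.
have a0 : a 0 0 = 0.
  by move/eqP: e2; rewrite mulf_eq0 (gt_eqF wwb) orbF => /eqP.
rewrite a0 b0 !scale0r add0r addr0 in xu.
have := neg x; rewrite xu submxMl -xu fx ltxx => /(_ isT x0).
by [].
Qed.

Theorem mainTheorem9 (d : nat) (hd1 : (1 < d)%N) (hdsf : squarefree d)
    (m n : nat) (hn : n = (2 * m)%N) (hm : odd m)
    (P : 'M[rat]_n) (w : 'rV[CC]_n) (H : 'M[CC]_n) (S : 'M[rat]_n)
    (hK3 : K3_type P w H) (hEnd : End_hod_is_quad w H d S) :
  totally_positive_quad d d%:R 1 /\
  ~ isometric P (((d%:R)%:M + S) *m P).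
Proof.
split.
  move=> r hr; rewrite ratr_nat rmorph1 mul1r.
  have h1 : 1 < d%:R :> RR by rewrite ltr1n.
  nra.
case: hK3 => hh hpol _.
have dP := detP_neq0 _ _ _ _ hh hpol.
case: hEnd => _ hS _.
have nsq : forall r : rat, r ^+ 2 != d%:R.
  move=> r; apply/negP => /eqP /rat_sq_nat [k dk].
  have k1 : (1 < k)%N by move: hd1; rewrite dk; nia.
  have pp := pdiv_prime k1.
  by have := hdsf _ pp; rewrite dk dvdn_mul // pdiv_dvd.
have hdet := det_dS _ _ hn _ _ nsq hS (d%:R).
case=> g [gu hg].
have := congr1 (fun M => \det M) hg => /=.
rewrite !det_mulmx det_tr hdet => e.
have e2 : (\det g) ^+ 2 * ((d%:R : rat) ^+ 2 - d%:R) ^+ m = 1.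
  apply: (mulIf dP); rewrite mul1r -[in RHS]e; ring.
have mE : m = (m./2.*2).+1 by rewrite -[LHS]odd_double_half hm.
set k := m./2 in mE; rewrite mE in e2.
set c : rat := (d%:R : rat) ^+ 2 - d%:R in e2.
set t := c ^+ k * \det g.
have e3 : c * t ^+ 2 = 1.
  rewrite -e2 /t -muln2 (exprS c) exprM; ring.
have t0 : t != 0 by apply: contra_eq_neq e3 => ->; rewrite expr0n mulr0 eq_sym oner_eq0.
have : (t^-1) ^+ 2 = (d * d - d)%N%:R.
  rewrite natrB ?leq_pmulr ?(ltnW hd1) // natrM -[_ * _]expr2 -/c.
  apply: (mulIf (expf_neq0 2 t0)); rewrite e3 -exprMn mulVf //; ring.
case/rat_sq_nat => j hj.
have hlo : ((d - 1) * (d - 1) < j * j)%N by rewrite -hj; nia.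
have hhi : (j * j < d * d)%N by rewrite -hj; nia.
have : (d - 1 < j)%N by rewrite ltnNge; apply/negP => le; move: hlo; rewrite ltnNge leq_mul //.
have : (j < d)%N by rewrite ltnNge; apply/negP => le; move: hhi; rewrite ltnNge leq_mul //.
lia.
Qed.
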